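(* Let $G$ be a unit square graph and let $C$ be a maximal clique of $G$. Then there are vertices $v_1,v_2,v_3,v_4\in V(G)$ (not necessarily distinct) such that $C=\bigcap_{i=1}^4 N[v_i]$.
   Context: A unit square graph is a graph $G$ admitting $f\colon V(G)\to\mathbb{R}^2$ with $vw\in E(G)$ iff $\|f(v)-f(w)\|_\infty\le1$ for distinct $v,w$. $N[v]$ denotes the closed neighborhood of $v$. *)

(* Defs.v *)
From Stdlib Require Import Reals.
From mathcomp Require Import all_boot.

Set Implicit Arguments.
Unset Strict Implicit.
Unset Printing Implicit Defensive.

Definition unit_square_graph (T : finType) (e : rel T) : Prop :=
  exists f : T -> (R * R),
    forall v w : T, v <> w ->
      (e v w <-> Rle (Rmax (Rabs (Rminus (fst (f v)) (fst (f w))))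
                     (Rabs (Rminus (snd (f v)) (snd (f w))))) R1).

Definition is_clique (T : finType) (e : rel T) (C : {set T}) : Prop :=
  forall x y, x \in C -> y \in C -> x != y -> e x y.

Definition maximal_clique (T : finType) (e : rel T) (C : {set T}) : Prop :=
  is_clique e C /\ forall D : {set T}, is_clique e D -> C \subset D -> D = C.

Definition closed_nbhd (T : finType) (e : rel T) (v : T) : {set T} :=
  [set w | (w == v) || e v w].

(* Main.v *)
Require Import Defs.
From Stdlib Require Import Reals Lra.
From mathcomp Require Import all_boot.

Lemma ex_minR (T : eqType) (g : T -> R) (s : seq T) x0 : x0 \in s ->
  exists2 x, x \in s & forall y, y \in s -> Rle (g x) (g y).
Proof.
elim: s x0 => [//|a s IH] x0 _.
case: s IH => [|b s] IH.
  exists a; first by rewrite inE.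
  by move=> y; rewrite inE => /eqP ->; apply: Rle_refl.
have [x xs Hx] := IH b (mem_head _ _).
destruct (Rle_dec (g a) (g x)) as [H|H].
  exists a; first exact: mem_head.
  move=> y; rewrite inE => /orP [/eqP ->|ys]; first exact: Rle_refl.
  exact: Rle_trans H (Hx y ys).
exists x; first by rewrite inE xs orbT.
move=> y; rewrite inE => /orP [/eqP ->|ys]; last exact: Hx.
lra.
Qed.

Lemma rmax_iff (a b : R) :
  Rle (Rmax (Rabs a) (Rabs b)) 1 <-> ((Rle (-1) a /\ Rle a 1) /\ (Rle (-1) b /\ Rle b 1)).
Proof.
unfold Rmax, Rabs.
repeat (destruct Rle_dec || destruct Rcase_abs); split; intros; lra.
Qed.

Theorem mainTheorem8 (T : finType) (e : rel T)
  (Hirr : irreflexive e) (Hne : 0 < #|T|)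
  (HG : unit_square_graph e) (C : {set T}) (HC : maximal_clique e C) :
  exists v1 v2 v3 v4 : T,
    C = closed_nbhd e v1 :&: closed_nbhd e v2 :&: closed_nbhd e v3 :&: closed_nbhd e v4.
Proof.
destruct HC as [Hcl Hmax]. destruct HG as [f Hf].
have [C0|[x0 x0C]] := set_0Vmem C.
  move/card_gt0P: Hne => [t _].
  have Hd : is_clique e [set t].
    by move=> x y; rewrite !inE => /eqP -> /eqP ->; rewrite eqxx.
  have := Hmax _ Hd; rewrite C0 sub0set => /(_ isT) Ht.
  by have := set11 t; rewrite Ht inE.
have x0s : x0 \in enum C by rewrite mem_enum.
have [v1 v1C H1] := @ex_minR _ (fun v => fst (f v)) _ _ x0s.
have [v2 v2C H2] := @ex_minR _ (fun v => Ropp (fst (f v))) _ _ x0s.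
have [v3 v3C H3] := @ex_minR _ (fun v => snd (f v)) _ _ x0s.
have [v4 v4C H4] := @ex_minR _ (fun v => Ropp (snd (f v))) _ _ x0s.
rewrite !mem_enum in v1C v2C v3C v4C.
exists v1, v2, v3, v4.
apply/setP => w; rewrite !inE.
have nb : forall v, v \in C -> w \in C -> (w == v) || e v w.
  move=> v vC wC; case: eqVneq => //= Hwv; apply: Hcl => //.
  by rewrite eq_sym.
apply/idP/idP.
  by move=> wC; rewrite (nb v1 v1C wC) (nb v2 v2C wC) (nb v3 v3C wC) (nb v4 v4C wC).
case: (boolP (w \in C)) => // wC.
have nv : forall v, v \in C -> w != v.
  by move=> v vC; apply/eqP => E; rewrite E vC in wC.
have ev : forall v, v \in C -> (w == v) || e v w -> e v w.
  by move=> v vC; rewrite (negbTE (nv v vC)).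
move=> /andP [/andP [/andP [/(ev _ v1C) e1 /(ev _ v2C) e2] /(ev _ v3C) e3] /(ev _ v4C) e4].
have bnd : forall v, v \in C -> e v w ->
   ((Rle (-1) (Rminus (fst (f v)) (fst (f w))) /\ Rle (Rminus (fst (f v)) (fst (f w))) 1) /\
    (Rle (-1) (Rminus (snd (f v)) (snd (f w))) /\ Rle (Rminus (snd (f v)) (snd (f w))) 1)).
  move=> v vC evw; apply/rmax_iff; apply/(Hf v w) => //.
  by apply/eqP; rewrite eq_sym nv.
have B1 := bnd _ v1C e1. have B2 := bnd _ v2C e2.
have B3 := bnd _ v3C e3. have B4 := bnd _ v4C e4.
have adj : forall u, u \in C -> e w u /\ e u w.
  move=> u uC.
  have us : u \in enum C by rewrite mem_enum.
  have := H1 u us; have := H2 u us; have := H3 u us; have := H4 u us.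
  rewrite /= => h4 h3 h2 h1.
  have wu : w <> u by apply/eqP; apply: nv.
  split.
    apply/(Hf w u wu); apply/rmax_iff; lra.
  apply/(Hf u w (fun E => wu (esym E))); apply/rmax_iff; lra.
have Hd : is_clique e (w |: C).
  move=> x y; rewrite !inE => /orP [/eqP ->|xC] /orP [/eqP ->|yC].
  - by rewrite eqxx.
  - by move=> _; case: (adj y yC).
  - by move=> _; case: (adj x xC).
  - exact: Hcl.
have := Hmax _ Hd (subsetUr _ _) => E.
by have := setU11 w C; rewrite E (negbTE wC).
Qed.
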